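(* Let ${\bf A}=(a(i,j))_{1\le i,j\le n}$ be a real $n\times n$ matrix with no zero row, and let ${\bf A}_{\rm sde}$ and $|\tilde{\bf A}|$ be the matrices associated with ${\bf A}$ as defined below. Then for every nonzero complex number $\lambda$, the algebraic multiplicity of $\lambda$ as an eigenvalue of ${\bf A}_{\rm sde}$ equals the algebraic multiplicity of $\lambda$ as an eigenvalue of $|\tilde{\bf A}|$ (with multiplicity $0$ meaning $\lambda$ is not an eigenvalue).
   Context: For a real number $t$, $t_+=\max(t,0)$. Define $w_i=\big(\sum_{j=1}^n |a(i,j)|\big)^{-1}$, $1\le i\le n$, and $\tilde a(i,j)=w_i\,a(i,j)$. Let $|\tilde{\bf A}|=(|\tilde a(i,j)|)_{1\le i,j\le n}$ (an $n\times n$ row stochastic matrix), $\tilde{\bf A}_+=\big((\tilde a(i,j))_+\big)_{i,j}$, $\tilde{\bf A}_-=\big((-\tilde a(i,j))_+\big)_{i,j}$, and $${\bf A}_{\rm sde}=\begin{pmatrix}\tilde{\bf A}_+ & \tilde{\bf A}_-\\ \tilde{\bf A}_+ & \tilde{\bf A}_-\end{pmatrix}\in\mathbb{R}^{2n\times 2n}.$$ *)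

(* Defs.v *)
From HB Require Import structures.
From mathcomp Require Import all_boot all_order all_algebra.
From mathcomp Require Import complex.
From mathcomp Require Import reals.
Set Implicit Arguments. Unset Strict Implicit. Unset Printing Implicit Defensive.
Import Order.TTheory GRing.Theory Num.Theory.
Local Open Scope ring_scope.

Section SDE.
Variables (R : realType) (n : nat).
Implicit Types (A : 'M[R]_n).

Definition row_weight A (i : 'I_n) : R := (\sum_(j < n) `|A i j|)^-1.

Definition tildeA A : 'M[R]_n := \matrix_(i, j) (row_weight A i * A i j).

Definition abs_tildeA A : 'M[R]_n := \matrix_(i, j) `|tildeA A i j|.

Definition tildeA_pos A : 'M[R]_n := \matrix_(i, j) Num.max (tildeA A i j) 0.
Definition tildeA_neg A : 'M[R]_n := \matrix_(i, j) Num.max (- tildeA A i j) 0.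

Definition A_sde A : 'M[R]_(n + n) :=
  block_mx (tildeA_pos A) (tildeA_neg A) (tildeA_pos A) (tildeA_neg A).

End SDE.

Definition alg_mult (R : realType) (m : nat) (M : 'M[R]_m) (l : R[i]) : nat :=
  mup l (char_poly (map_mx (fun x : R => (x%:C)%C) M)).

(* Main.v *)
Require Import Defs.
From HB Require Import structures.
From mathcomp Require Import all_boot all_order all_algebra.
From mathcomp Require Import complex.
From mathcomp Require Import reals.
Import Order.TTheory GRing.Theory Num.Theory.
Local Open Scope ring_scope.

Lemma zz (V : zmodType) (x p q : V) : -(x-p) - p + q + x - q = 0.
Proof. by rewrite opprB (addrAC p) subrr add0r (addrAC (-x)) addNr add0r subrr. Qed.
Lemma zz2 (V : zmodType) (x q : V) : q + x - q = x.
Proof. by rewrite addrAC subrr add0r. Qed.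

Lemma char_poly_block (K : comNzRingType) (n : nat) (P N : 'M[K]_n) :
  char_poly (block_mx P N P N) = 'X^n * char_poly (P + N).
Proof.
rewrite /char_poly /char_poly_mx map_block_mx (scalar_mx_block n n) /=.
set P' := map_mx polyC P; set N' := map_mx polyC N.
set L : 'M[{poly K}]_(n + n) := block_mx 1%:M 0 (- 1%:M) 1%:M.
set U : 'M[{poly K}]_(n + n) := block_mx 1%:M 0 1%:M 1%:M.
have dL : \det L = 1 by rewrite det_lblock !det1 mulr1.
have dU : \det U = 1 by rewrite det_lblock !det1 mulr1.
set M := (_ - _).
have -> : \det M = \det (L *m M *m U) by rewrite !det_mulmx dL dU mulr1 mul1r.
rewrite /M /L /U opp_block_mx add_block_mx !mulmx_block.
rewrite !mul1mx !mul0mx !mulmx1 !mulmx0 !addr0 !add0r !mulNmx !mul1mx.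
rewrite opprK !addrA.
have -> : N' + 'X%:M - N' = 'X%:M by apply: zz2.
have -> : - ('X%:M - P') - P' + N' + 'X%:M - N' = 0.
  exact: zz.
rewrite det_ublock det_scalar map_mxD opprD addrA mulrC.
by [].
Qed.

Lemma abs_split (R : realDomainType) (t : R) :
  `|t| = Num.max t 0 + Num.max (- t) 0.
Proof.
rewrite /Num.max; case: (lerP 0 t) => h.
  rewrite ger0_norm // oppr_lt0; case: (ltrP 0 t) => h2; first by rewrite addr0.
  have -> : t = 0 by apply/le_anti; rewrite h h2.
  by rewrite oppr0 addr0.
by rewrite ltr0_norm // oppr_lt0 ltNge (ltW h) /= add0r.
Qed.

Theorem proposition2 (R : realType) (n : nat) (A : 'M[R]_n) :
  (forall i : 'I_n, exists j : 'I_n, A i j != 0) ->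
  forall l : R[i], l != 0 ->
    alg_mult (A_sde A) l = alg_mult (abs_tildeA A) l.
Proof.
move=> _ l hl; rewrite /alg_mult /A_sde map_block_mx char_poly_block.
have -> : map_mx (fun x : R => (x%:C)%C) (abs_tildeA A) =
  map_mx (fun x : R => (x%:C)%C) (tildeA_pos A) +
  map_mx (fun x : R => (x%:C)%C) (tildeA_neg A).
  apply/matrixP => i j; rewrite !mxE abs_split.
  by apply/eqP; rewrite eq_complex /= addr0 !eqxx.
rewrite (@mupMr _ l ('X^n)) //.
by rewrite /root hornerXn expf_eq0 (negbTE hl) andbF.
Qed.
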